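(* Let $r\ge 2$ and $s_r\ge\cdots\ge s_1\ge 2$ be integers, $\alpha$ a real number with $0\le \alpha<1/s_1$, $s:=s_1+\cdots+s_r$, and $\mathbb{K}:=K^r_{s_1,\ldots,s_r}$. There is $n_0$ such that for all $n\ge n_0$ the following holds. If $\mathcal{H}$ is an $m$ by $n$ semibipartite $r$-graph on $V_1,V_2$ satisfying $$m \le \frac{(1-\alpha s_1)s_1}{(r-1)(s-s_1)}\,n \quad\text{and}\quad d_{\mathcal{H}}(v)\ge (1-\alpha)\binom{n}{r-1}\ \text{for all } v\in V_1,$$ then $\mathcal{H}$ contains $\lfloor m/s_1\rfloor$ pairwise vertex-disjoint ordered copies of $\mathbb{K}$.
   Context: An $r$-graph is a set of $r$-element subsets (edges) of a finite vertex set; $d_{\mathcal{H}}(v)$ is the number of edges containing $v$. An $m$ by $n$ semibipartite $r$-graph on $V_1,V_2$ has vertex set $V_1\cup V_2$ (disjoint), $|V_1|=m$, $|V_2|=n$, and every edge contains exactly one vertex of $V_1$. $K^r_{s_1,\ldots,s_r}$ is the complete $r$-partite $r$-graph with parts $W_1,\ldots,W_r$ of sizes $s_1,\ldots,s_r$. An ordered copy of it in a semibipartite $r$-graph on $V_1,V_2$ is a copy with $W_1\subseteq V_1$ and $W_2,\ldots,W_r\subseteq V_2$. *)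

(* Defs.v *)
From HB Require Import structures.
From mathcomp Require Import all_boot all_order all_algebra.
From mathcomp Require Export reals.
Set Implicit Arguments. Unset Strict Implicit. Unset Printing Implicit Defensive.

(* Vertex set V1 ∪ V2 is modelled as the disjoint sum 'I_m + 'I_n:
   inl = vertices of V1 (|V1| = m), inr = vertices of V2 (|V2| = n). *)
Definition in_V1 (m n : nat) (x : 'I_m + 'I_n) : bool :=
  if x is inl _ then true else false.

Definition semibipartite (r m n : nat) (H : {set {set 'I_m + 'I_n}}) : Prop :=
  forall e, e \in H -> #|e| = r /\ #|[set x in e | in_V1 x]| = 1.

Definition deg (T : finType) (H : {set {set T}}) (v : T) : nat :=
  #|[set e in H | v \in e]|.

Definition ordered_copy (r : nat) (s : nat -> nat) (m n : nat)
    (H : {set {set 'I_m + 'I_n}}) (W : nat -> {set 'I_m + 'I_n}) : Prop :=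
  [/\ (forall i, 1 <= i <= r -> #|W i| = s i),
      (forall x, x \in W 1 -> in_V1 x),
      (forall i, 2 <= i <= r -> forall x, x \in W i -> ~~ in_V1 x),
      (forall i j, 1 <= i <= r -> 1 <= j <= r -> i != j -> [disjoint W i & W j])
    & (forall f : nat -> 'I_m + 'I_n, (forall i, 1 <= i <= r -> f i \in W i) ->
         [set f i.+1 | i : 'I_r] \in H)].

Definition copy_vertices (r : nat) (T : finType) (W : nat -> {set T}) : {set T} :=
  \bigcup_(1 <= i < r.+1) W i.

(* Main.v *)
Require Import Defs.
From HB Require Import structures.
From mathcomp Require Import all_boot all_order all_algebra.
From mathcomp Require Import reals.
From mathcomp Require Import zify ring lra.
Set Implicit Arguments. Unset Strict Implicit. Unset Printing Implicit Defensive.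

(* Proof: greedy construction of copies; each step finds a
   copy via a density (Erdos-type) lemma for complete d-partite d-graphs. *)

Lemma card_all_tuples (T : finType) n (A : pred T) :
  #|[set t : n.-tuple T | all A t]| = #|A| ^ n.
Proof.
elim: n A => [|n IHn] A.
  by rewrite (@eq_card1 _ [tuple]) // => t; rewrite [t]tuple0 inE.
rewrite -sum1dep_card (partition_big (@thead _ _) A) /= => [|t]; last first.
  by case/tupleP: t => x t; case/andP.
rewrite expnS -sum_nat_const; apply: eq_bigr => x Ax.
rewrite -(IHn A) -sum1dep_card.
rewrite (reindex (fun t : n.-tuple T => [tuple of x :: t])) /=; last first.
  pose ttail (t : n.+1.-tuple T) := [tuple of behead t].
  exists ttail => [t _ | t /andP[_ /eqP <-]]; first exact: val_inj.
  by rewrite -tuple_eta.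
by apply: eq_bigl=> t; rewrite Ax theadE eqxx andbT /=.
Qed.

Lemma card_cons (T : finType) n (P : pred (n.+1.-tuple T)) :
  #|[set w | P w]| = \sum_(g : n.-tuple T) #|[set x | P [tuple of x :: g]]|.
Proof.
rewrite -sum1dep_card (partition_big (fun w : n.+1.-tuple T => [tuple of behead w]) predT) //=.
apply: eq_bigr => g _; rewrite -sum1dep_card.
rewrite (reindex (fun x : T => [tuple of x :: g])) /=; last first.
  exists (@thead _ _) => [x _ | w /andP[_ /eqP <-]]; first by rewrite theadE.
  by rewrite -tuple_eta.
apply: eq_bigl => x; have -> : [tuple of behead [tuple of x :: g]] = g by apply: val_inj.
by rewrite eqxx andbT.
Qed.
Lemma ffact_ge_exp a k : (a - k) ^ k <= a ^_ k.
Proof.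
elim: k a => [|k IH] a; first by [].
rewrite ffactnS expnS; apply: leq_mul; first exact: leq_subr.
have := IH a.-1; have -> : a.-1 - k = a - k.+1 by lia. by [].
Qed.

Lemma bern_nat N t d : t <= N -> N ^ d * N <= (N - t) ^ d * N + d * t * N ^ d.
Proof.
move=> tN; elim: d => [|d IH]; first by rewrite !expn0; lia.
rewrite !expnS.
set X := N ^ d in IH *; set Y := (N - t) ^ d in IH *.
have HM : N = (N - t) + t by lia.
set M := N - t in HM IH *.
rewrite HM in IH *.
nia.
Qed.

Lemma uniq_lb c t N D : 0 < t -> N <= 2 * c * D -> 4 * c * t <= N -> N ^ t <= (4 * c) ^ t * D ^_ t.
Proof.
move=> t0 h1 h2; apply: (leq_trans _ (leq_mul (leqnn _) (ffact_ge_exp D t))).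
rewrite -expnMn leq_exp2r //; nia.
Qed.

Lemma disjP (T : finType) (A B : {pred T}) :
  (forall x, x \in A -> x \in B -> False) -> [disjoint A & B].
Proof.
move=> h; rewrite disjoint_subset; apply/subsetP => x xA; rewrite inE.
by apply/negP => xB; exact: h x xA xB.
Qed.

Lemma box_witness (T : finType) d (A : nat -> {set T}) j (a : T) :
  (forall i, i < d -> 0 < #|A i|) -> forall (jd : j < d), a \in A j ->
  exists g : d.-tuple T, (forall i : 'I_d, tnth g i \in A i) /\ tnth g (Ordinal jd) = a.
Proof.
move=> hA jd aA.
exists [tuple (if val i == j then a else odflt a [pick x in A i]) | i < d].
split; last by rewrite tnth_mktuple /= eqxx.
move=> i; rewrite tnth_mktuple; case: eqP => [->|_] //.
case: pickP => [x Hx|H] //=.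
by have := hA i (ltn_ord i); rewrite (eq_card0 H).
Qed.

Lemma erdos d t : 0 < t -> forall c, exists N0, forall (T : finType) (P : pred (d.-tuple T)),
  N0 <= #|T| -> #|T| ^ d <= c * #|[set w | P w]| ->
  exists A : nat -> {set T},
    [/\ forall i, i < d -> #|A i| = t,
        forall i j, i < d -> j < d -> i != j -> [disjoint A i & A j]
      & forall w : d.-tuple T, (forall i : 'I_d, tnth w i \in A i) -> P w].
Proof.
move=> t0; elim: d => [|d IH] c.
  exists 0 => T P _; rewrite expn0 => h.
  exists (fun _ => set0); split => // w _.
  have : 0 < #|[set w | P w]| by case: (#|_|) h => //; rewrite muln0.
  case/card_gt0P => w0; rewrite inE; by rewrite [w]tuple0 [w0]tuple0.
pose K := 2 * c * (4 * c) ^ t.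
have [N1 HN1] := IH (2 * K).
exists (N1 + 4 * c * t + 2 * K * d * t + t + 1) => T P HN HP.
set N := #|T| in HN HP.
have N0 : 0 < N by lia.
pose nb (g : d.-tuple T) := [pred x | P [tuple of x :: g]].
pose deg (g : d.-tuple T) := #|[set x | P [tuple of x :: g]]|.
pose good (g : d.-tuple T) := N <= 2 * c * deg g.
have degN g : deg g <= N by exact: max_card.
have HPs : #|[set w | P w]| = \sum_g deg g by rewrite card_cons.
have Hgood : N ^ d <= 2 * c * #|[set g | good g]|.
  have e1 : \sum_g deg g = \sum_(g | good g) deg g + \sum_(g | ~~ good g) deg g by rewrite (bigID good).
  have e2 : \sum_(g | good g) deg g <= #|[set g | good g]| * N.
    rewrite -sum1dep_card big_distrl /=; apply: leq_sum => g _; rewrite mul1n; exact: degN.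
  have e3 : 2 * c * \sum_(g | ~~ good g) deg g <= N ^ d * N.
    rewrite big_distrr /=; apply: (@leq_trans (\sum_(g : d.-tuple T) N)).
      rewrite [X in _ <= X](bigID (fun g => ~~ good g)) /=; apply: (leq_trans _ (leq_addr _ _)).
      by apply: leq_sum => g; rewrite /good -ltnNge => /ltnW.
    by rewrite sum_nat_const card_tuple.
  move: HP; rewrite HPs e1 expnS => HP'.
  rewrite -(leq_pmul2r N0); nia.
pose F (tau : t.-tuple T) := #|[set g | good g && all (nb g) tau && uniq tau]|.
have dc : \sum_tau F tau = \sum_(g | good g) #|[set tau : t.-tuple T | all (nb g) tau & uniq tau]|.
  rewrite /F; under eq_bigr => tau _ do rewrite -sum1dep_card.
  rewrite (exchange_big_dep good) /=; last by move=> i j _ /andP[/andP[]].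
  apply: eq_bigr => g gg; rewrite -sum1dep_card; apply: eq_bigl => tau.
  by rewrite gg.
have Hsum : N ^ d * N ^ t <= K * \sum_tau F tau.
  rewrite dc.
  have : #|[set g | good g]| * N ^ t <= (4 * c) ^ t * \sum_(g | good g) #|[set tau : t.-tuple T | all (nb g) tau & uniq tau]|.
    rewrite -sum1dep_card !big_distrl big_distrr /=; apply: leq_sum => g gg.
    rewrite mul1n card_uniq_tuples.
    have -> : #|nb g| = deg g by apply: eq_card => x; rewrite inE.
    apply: uniq_lb => //; lia.
  move=> H1; apply: (leq_trans (leq_mul Hgood (leqnn (N ^ t)))).
  rewrite /K -mulnA -[X in _ <= X]mulnA leq_mul2l; apply/orP; right.
  exact: H1.
have [tau Htau] : exists tau, N ^ d <= K * F tau.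
  case: (boolP [exists tau, N ^ d <= K * F tau]) => [/existsP//|/existsPn H].
  have : \sum_tau K * F tau <= \sum_(tau : t.-tuple T) (N ^ d - 1).
    by apply: leq_sum => tau _; have := H tau; rewrite -ltnNge; lia.
  rewrite -big_distrr sum_nat_const card_tuple /= => H2.
  have : 0 < N ^ d by rewrite expn_gt0 N0.
  have : 0 < N ^ t by rewrite expn_gt0 N0.
  move=> h1 h2; move: Hsum H2 h1 h2; rewrite /N; set X := #|T| ^ d; set Y := #|T| ^ t; set S := \sum_tau F tau; nia.
have utau : uniq tau.
  case: (boolP (uniq tau)) => // nu.
  have F0 : F tau = 0 by apply: eq_card0 => g; rewrite inE (negbTE nu) andbF.
  move: Htau; rewrite F0 muln0 leqn0 expn_eq0 => /andP[/eqP NN _]; lia.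
have ctau : #|tau| = t by rewrite (card_uniqP utau) size_tuple.
have tN : t <= N by rewrite -ctau; exact: max_card.
pose Q (g : d.-tuple T) := all (nb g) tau && all [pred y | y \notin tau] g.
have HQ : N ^ d <= 2 * K * #|[set g | Q g]|.
  pose Fs := [set g | good g && all (nb g) tau && uniq tau].
  pose Av := [set g : d.-tuple T | all [pred y | y \notin tau] g].
  have cAv : #|Av| = (N - t) ^ d.
    rewrite card_all_tuples; congr (_ ^ _).
    have := cardC (mem tau); rewrite ctau -/N => <-; rewrite addKn.
    by apply: eq_card => x.
  have sub : Fs :&: Av \subset [set g | Q g].
    apply/subsetP => g; rewrite !inE => /andP[/andP[/andP[_ h1] _] h2].
    by rewrite /Q h1 h2.
  have c1 := subset_leq_card sub.
  have c2 := cardsUI Fs Av.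
  have c3 : #|Fs :|: Av| <= N ^ d by rewrite -card_tuple; exact: max_card.
  have c4 := bern_nat d tN.
  have eF : #|Fs| = F tau by [].
  rewrite eF cAv in c2.
  move: Htau c1 c2 c3 c4 HN; rewrite /N.
  set X := #|T| ^ d; set Y := (#|T| - t) ^ d; set Z := #|[set g | Q g]|; set W := #|Fs :&: Av|.
  set U := #|Fs :|: Av|; set M := #|T|; set FF := F tau => h1 h2 h3 h4 h5 h6.
  have h7 : M * Z + d * t * X >= M * FF by nia.
  have h8 : 2 * K * d * t <= M by lia.
  have h9 : 2 * K * M * Z + M * X >= 2 * M * X by nia.
  have M0 : 0 < M by lia.
  rewrite -(leq_pmul2l M0); nia.
have [A [HA1 HA2 HA3]] := HN1 T Q ltac:(lia) HQ.
have notin j a : j < d -> a \in A j -> a \notin tau.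
  move=> jd aA; have [g [hg ga]] := box_witness (fun i hi => (eq_ind_r (fun z => 0 < z) t0 (HA1 i hi))) jd aA.
  have /andP[_ /allP h] := HA3 g hg.
  by have := h _ (mem_tnth (Ordinal jd) g); rewrite ga.
exists (fun i => if i is i'.+1 then A i' else [set x in tau]); split.
- case => [_|i] /=; first by rewrite cardsE ctau.
  by move=> hi; apply: HA1.
- case => [|i] [|j] //= hi hj hij.
  + by apply: disjP => x; rewrite inE => xt /(notin _ _ (hj : j < d)); rewrite xt.
  + by apply: disjP => x /(notin _ _ (hi : i < d)) xn; rewrite inE (negbTE xn).
  + by apply: HA2.
- move=> w; case/tupleP: w => x g Hw.
  have hx := Hw ord0; rewrite tnth0 /= inE in hx.
  have hg : forall i : 'I_d, tnth g i \in A i.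
    by move=> i; have := Hw (lift ord0 i); rewrite tnthS lift0.
  have /andP[/allP h1 _] := HA3 g hg.
  exact: h1 x hx.
Qed.

Definition Ed m n (v : 'I_m) (w : seq 'I_n) : {set 'I_m + 'I_n} :=
  [set inl v] :|: inr @: [set x in w].

Lemma inl_notin_inr m n (v : 'I_m) (S : {set 'I_n}) : inl v \notin inr @: S.
Proof. by apply/imsetP => -[y _]. Qed.

Lemma edge_struct r m n (H : {set {set 'I_m + 'I_n}}) (v : 'I_m) e :
  semibipartite r.+1 H -> e \in H -> inl v \in e ->
  e = [set inl v] :|: inr @: [set x | inr x \in e] /\ #|[set x | inr x \in e]| = r.
Proof.
move=> sb eH ve; have [h1 h2] := sb e eH.
have V1e : forall w, inl w \in e -> w = v.
  have /cards1P [a Ha] : #|[set x in e | in_V1 x]| == 1 by rewrite h2.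
  have va : inl v \in [set x in e | in_V1 x] by rewrite inE ve.
  move=> w we; have wa : inl w \in [set x in e | in_V1 x] by rewrite inE we.
  by rewrite Ha !inE in va wa; move: va wa => /eqP <- /eqP [->].
have eE : e = [set inl v] :|: inr @: [set x | inr x \in e].
  apply/setP => -[w|y]; rewrite !inE.
    rewrite (negbTE (inl_notin_inr _ _)) orbF; apply/idP/eqP => [/V1e -> //|[->] //].
  by rewrite mem_imset ?inE //; move=> a b [].
split => //.
have := h1; rewrite {1}eE cardsU1 inl_notin_inr card_imset; last by move=> a b [].
by move=> [].
Qed.

Lemma lk_count r m n (H : {set {set 'I_m + 'I_n}}) (v : 'I_m) : semibipartite r.+1 H ->
  #|[set w : r.-tuple 'I_n | uniq w && (Ed v w \in H)]| = (r`! * deg H (inl v))%N.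
Proof.
move=> sb.
rewrite -sum1dep_card (partition_big (fun w : r.-tuple 'I_n => Ed v w)
  (fun e => (e \in H) && (inl v \in e))) /=; last first.
  by move=> w /andP[_ ->]; rewrite /Ed !inE eqxx.
rewrite /deg mulnC -sum1dep_card big_distrl /=.
apply: eq_bigr => e /andP[eH ve]; rewrite mul1n sum1dep_card.
have [eE cS] := edge_struct sb eH ve.
set S := [set x | inr x \in e] in eE cS.
transitivity #|[set w : r.-tuple 'I_n | all (mem S) w & uniq w]|; last first.
  by rewrite card_uniq_tuples cS ffactnn.
apply: eq_card => w; rewrite !inE.
apply/idP/idP.
  case/andP => [/andP[uw _] /eqP Ew]; rewrite uw andbT; apply/allP => x xw.
  change (x \in S); by rewrite inE -Ew /Ed !inE; apply/orP; right; apply: imset_f; rewrite inE.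
case/andP => aw uw.
have Ew : Ed v w = e.
  rewrite [RHS]eE /Ed; congr (_ :|: _); congr (imset _ _).
  have -> : [set x in w] = S; last by [].
  apply/eqP; rewrite eqEcard cS cardsE (card_uniqP uw) size_tuple leqnn andbT.
  by apply/subsetP => x; rewrite inE => xw; apply: (allP aw).
by rewrite uw Ew eH eqxx.
Qed.


Section Mem.
Variables (m n : nat).
Lemma inl_in (a : 'I_m) (A : {set 'I_m}) : (inl a \in (inl @: A : {set 'I_m + 'I_n})) = (a \in A).
Proof. by rewrite mem_imset // => x y []. Qed.
Lemma inr_in (b : 'I_n) (B : {set 'I_n}) : (inr b \in (inr @: B : {set 'I_m + 'I_n})) = (b \in B).
Proof. by rewrite mem_imset // => x y []. Qed.
Lemma inl_inr (a : 'I_m) (B : {set 'I_n}) : (inl a \in (inr @: B : {set 'I_m + 'I_n})) = false.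
Proof. by apply/imsetP => -[]. Qed.
Lemma inr_inl (b : 'I_n) (A : {set 'I_m}) : (inr b \in (inl @: A : {set 'I_m + 'I_n})) = false.
Proof. by apply/imsetP => -[]. Qed.
End Mem.

Lemma disj_sum m n (A C : {set 'I_m}) (B D : {set 'I_n}) (X Y : {set 'I_m + 'I_n}) :
  X \subset inl @: A :|: inr @: B -> Y \subset inl @: C :|: inr @: D ->
  [disjoint A & C] -> [disjoint B & D] -> [disjoint X & Y].
Proof.
move=> sX sY dAC dBD; apply: disjP => x xX xY.
have := subsetP sX x xX; have := subsetP sY x xY.
case: x {xX xY} => [a|b]; rewrite !in_setU ?inl_in ?inl_inr ?inr_in ?inr_inl ?orbF /= => h1 h2.
  by have := disjointFr dAC h2; rewrite h1.
by have := disjointFr dBD h2; rewrite h1.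
Qed.

Definition mkW d m n (V : {set 'I_m}) (B : nat -> {set 'I_n}) (i : nat) : {set 'I_m + 'I_n} :=
  if i == 1 then inl @: V else if (2 <= i <= d.+1) then inr @: B (i - 2) else set0.

Lemma mkW_sub d m n (V : {set 'I_m}) (B : nat -> {set 'I_n}) :
  copy_vertices d.+1 (mkW d V B) \subset inl @: V :|: inr @: (\bigcup_(i < d) B i).
Proof.
rewrite /copy_vertices; elim/big_rec: _ => [|i X _ IH]; first exact: sub0set.
rewrite subUset IH andbT /mkW; case: eqP => [_|_]; first exact: subsetUl.
case: ifP => [/andP[h1 h2]|_]; last exact: sub0set.
apply: subset_trans (subsetUr _ _); apply: imsetS.
have hi : i - 2 < d by lia.
exact: (bigcup_sup (Ordinal hi)).
Qed.

Lemma copy_ok d m n (H : {set {set 'I_m + 'I_n}}) (s : nat -> nat) (V : {set 'I_m})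
    (B : nat -> {set 'I_n}) (x0 : 'I_n) :
  #|V| = s 1 -> (forall i, i < d -> #|B i| = s i.+2) ->
  (forall i j, i < d -> j < d -> i != j -> [disjoint B i & B j]) ->
  (forall w : d.-tuple 'I_n, (forall i : 'I_d, tnth w i \in B i) ->
      forall v, v \in V -> Ed v w \in H) ->
  ordered_copy d.+1 s H (mkW d V B).
Proof.
move=> hV hB hdis hbox; rewrite /ordered_copy /mkW; split.
- move=> i /andP[i1 id]; case: eqP => [->|ne1].
    by rewrite card_imset // => x y [].
  have -> : (2 <= i <= d.+1) = true by apply/andP; split => //; lia.
  rewrite card_imset; last by move=> x y [].
  have -> : i = (i - 2).+2 by lia.
  by rewrite hB; [congr s; lia | lia].
- by move=> x /= /imsetP [y _ ->].
- move=> i /andP[i2 id] x; have -> : (i == 1) = false by apply/eqP; lia.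
  by rewrite i2 id /= => /imsetP [y _ ->].
- move=> i j /andP[i1 id] /andP[j1 jd] ij.
  case: (eqVneq i 1) => [ei|ni]; case: (eqVneq j 1) => [ej|nj].
  + by rewrite ei ej eqxx in ij.
  + rewrite /=.
    have -> : (2 <= j <= d.+1) = true by apply/andP; split => //; lia.
    by apply: disjP => x /imsetP [a _ ->]; rewrite inl_inr.
  + rewrite /=.
    have -> : (2 <= i <= d.+1) = true by apply/andP; split => //; lia.
    by apply: disjP => x /imsetP [a _ ->]; rewrite inr_inl.
  + rewrite /=.
    have -> : (2 <= i <= d.+1) = true by apply/andP; split => //; lia.
    have -> : (2 <= j <= d.+1) = true by apply/andP; split => //; lia.
    have := hdis (i - 2) (j - 2) ltac:(lia) ltac:(lia) ltac:(apply/eqP; lia).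
    move=> hd; apply: disjP => x /imsetP [a ha ->]; rewrite inr_in => hb.
    by have := disjointFr hd ha; rewrite hb.
- move=> f hf.
  have := hf 1 isT; rewrite eqxx => /imsetP [v vV e1].
  pose g (i : nat) := if f i.+2 is inr y then y else x0.
  have hg : forall i, i < d -> f i.+2 = inr (g i) /\ g i \in B i.
    move=> i hi; have := hf i.+2 ltac:(lia).
    have -> : (i.+2 == 1) = false by [].
    have -> : (2 <= i.+2 <= d.+1) = true by apply/andP; split => //; lia.
    have -> : i.+2 - 2 = i by lia.
    by case/imsetP => y yB fy; rewrite /g fy.
  pose w := [tuple g i | i < d].
  have hw : Ed v w \in H.
    apply: hbox vV => i; rewrite tnth_mktuple; exact: (hg i (ltn_ord i)).2.
  suff -> : [set f i.+1 | i : 'I_d.+1] = Ed v w by [].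
  apply/setP => x; apply/imsetP/idP.
    case=> -[[|i] hi] _ -> /=.
      by rewrite e1 /Ed !inE eqxx.
    have hi' : i < d by lia.
    rewrite (hg i hi').1 /Ed in_setU inr_in inE; apply/orP; right.
    have -> : g i = tnth w (Ordinal hi') by rewrite tnth_mktuple.
    by rewrite inE; apply: mem_tnth.
  rewrite /Ed in_setU in_set1 => /orP [/eqP ->|].
    by exists ord0.
  case/imsetP => y; rewrite inE => /tnthP [i ->] ->.
  have hi : i.+1 < d.+1 by rewrite ltnS ltn_ord.
  exists (Ordinal hi) => //=.
  by rewrite tnth_mktuple (hg i (ltn_ord i)).1.
Qed.


Import Order.TTheory GRing.Theory Num.Theory.
Local Open Scope ring_scope.

Lemma bern_real (R : realFieldType) (x y : R) k : 0 <= y -> y <= x ->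
  x ^+ k.+1 - k.+1%:R * y * x ^+ k <= (x - y) ^+ k.+1.
Proof.
move=> y0 yx; elim: k => [|k IH]; first by rewrite !expr1 expr0 mul1r mulr1.
have x0 : 0 <= x by lra.
have xk0 : 0 <= x ^+ k by apply: exprn_ge0.
move: IH; rewrite [x ^+ k.+2]exprS [x ^+ k.+1]exprS [(x - y) ^+ k.+2]exprS.
rewrite -[(k.+2)%:R]natr1 -[(k.+1)%:R]natr1.
set z := k%:R; have z0 : 0 <= z by apply: ler0n.
set X := x ^+ k in xk0 *; set P := (x - y) ^+ k.+1 => IH.
have h := ler_wpM2l (_ : 0 <= x - y) IH.
have e : (x - y) * (x * X - (z + 1) * y * X) =
   x * (x * X) - (z + 1 + 1) * y * (x * X) + (z + 1) * y * y * X by ring.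
have p : 0 <= (z + 1) * y * y * X.
  by apply: mulr_ge0 => //; apply: mulr_ge0 => //; apply: mulr_ge0 => //; lra.
have h' := h ltac:(lra).
rewrite e in h'; lra.
Qed.

Lemma ffact_le_exp (n k : nat) : (n ^_ k <= n ^ k)%N.
Proof.
elim: k => [|k IH] //; rewrite ffactnSr expnSr; apply: leq_mul IH (leq_subr _ _).
Qed.

Lemma natrB_ge (R : numDomainType) (a b : nat) : a%:R - b%:R <= (a - b)%:R :> R.
Proof.
case: (leqP b a) => h; first by rewrite natrB.
have -> : (a - b)%N = 0%N by apply/eqP; rewrite subn_eq0 ltnW.
by rewrite subr_le0 ler_nat ltnW.
Qed.

Lemma bern_strict (R : realFieldType) (x : R) k : 0 < x -> x <= 1 ->
  1 - k.+2%:R * x < (1 - x) ^+ k.+2.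
Proof.
move=> x0 x1; have h := bern_real k (ltW x0) x1.
rewrite !expr1n mulr1 in h.
rewrite exprS; set A := (1 - x) ^+ k.+1 in h *.
rewrite -[(k.+2)%:R]natr1 -[(k.+1)%:R]natr1 in h *.
set z := k%:R in h *; have z0 : 0 <= z by apply: ler0n.
have h2 := ler_wpM2l (_ : 0 <= 1 - x) h.
have p : 0 < (z + 1) * x * x by apply: mulr_gt0 => //; apply: mulr_gt0 => //; lra.
have e : (1 - x) * (1 - (z + 1) * x) = 1 - (z + 1 + 1) * x + (z + 1) * x * x by ring.
rewrite e in h2; rewrite mulrC; lra.
Qed.

Lemma dens (R : realType) (d s1 : nat) (alpha : R) : (2 <= d)%N -> 0 <= alpha ->
  alpha * s1%:R < 1 ->
  exists c n1 : nat, forall n u : nat, (n1 <= n)%N ->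
    u%:R * d%:R <= (1 - alpha * s1%:R) * n%:R ->
    n%:R ^+ d <= c%:R * (((n - u) ^_ d)%:R - s1%:R * alpha * (n ^_ d)%:R).
Proof.
case: d => [|[|k]] // _ a0 as1.
set d := k.+2.
have d0 : (0:R) < d%:R by rewrite ltr0n.
have d2 : (2:R) <= d%:R by rewrite ler_nat.
have as0 : 0 <= alpha * s1%:R by apply: mulr_ge0 => //; apply: ler0n.
pose be := (1 - alpha * s1%:R) / d%:R.
have be0 : 0 < be by apply: divr_gt0 => //; lra.
have be1 : be * d%:R = 1 - alpha * s1%:R by rewrite /be mulfVK // gt_eqF.
have beh : be <= 1 / 2.
  have : be * 2 <= be * d%:R by apply: ler_wpM2l => //; apply: ltW.
  lra.
pose a := 1 - be.
pose ga := a ^+ d - alpha * s1%:R.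
have ga0 : 0 < ga.
  have := bern_strict k be0 (_ : be <= 1); rewrite -/d /ga /a.
  have -> : d%:R * be = 1 - alpha * s1%:R by rewrite mulrC.
  move=> h; have := h ltac:(lra); lra.
have ga1 : ga <= 1.
  have : a ^+ d <= 1 by apply: exprn_ile1; rewrite /a; lra.
  rewrite /ga; lra.
pose c := Num.bound (2 / ga).
have hc : 2 / ga < c%:R by apply: archi_boundP; apply: divr_ge0 => //; apply: ltW.
pose n2 := Num.bound (2 * d%:R ^+ 2 / ga).
have hn2 : 2 * d%:R ^+ 2 / ga < n2%:R.
  apply: archi_boundP; apply: divr_ge0; last exact: ltW.
  by apply: mulr_ge0 => //; apply: exprn_ge0; apply: ltW.
exists c, (2 * d + n2)%N => n u hn0 hu.
have hn : 2 * d%:R + n2%:R <= n%:R :> R.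
  by move: hn0; rewrite -(ler_nat R) natrD natrM.
have n2ge : 2 * d%:R ^+ 2 / ga <= n%:R.
  have : 0 <= d%:R :> R by apply: ltW.
  have : (0:R) <= n2%:R by apply: ler0n.
  lra.
have n2ge' : 2 * d%:R ^+ 2 <= ga * n%:R.
  by rewrite -ler_pdivrMl // mulrC.
have ub : u%:R <= be * n%:R.
  rewrite -(ler_pM2r d0); rewrite -mulrA (mulrC n%:R) mulrA be1; exact: hu.
set M := (n - u - d)%N.
have hM : a * n%:R - d%:R <= M%:R.
  apply: le_trans (natrB_ge _ _ _); apply: lerB => //.
  apply: le_trans (natrB_ge _ _ _); rewrite /a; lra.
have an0 : d%:R <= a * n%:R.
  have : (1/2) * n%:R <= a * n%:R by apply: ler_wpM2r; [apply: ler0n| rewrite /a; lra].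
  have := ler0n R n2; lra.
have h1 : M%:R ^+ d <= ((n - u) ^_ d)%:R :> R by rewrite -natrX ler_nat ffact_ge_exp.
have h2 : (a * n%:R - d%:R) ^+ d <= M%:R ^+ d.
  by apply: lerXn2r; rewrite ?nnegrE ?ler0n //; lra.
have h3 : a ^+ d * n%:R ^+ d - d%:R * d%:R * (a * n%:R) ^+ k.+1 <= (a * n%:R - d%:R) ^+ d.
  by have := bern_real k.+1 (ltW d0) an0; rewrite exprMn => h; exact: h.
have hak : a ^+ k.+1 <= 1 by apply: exprn_ile1; rewrite /a; lra.
have nk0 : 0 <= n%:R ^+ k.+1 :> R by apply: exprn_ge0; apply: ler0n.
have h3' : (a * n%:R) ^+ k.+1 <= n%:R ^+ k.+1.
  rewrite exprMn; rewrite -[X in _ <= X]mul1r; exact: ler_wpM2r.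
have h4 : (n ^_ d)%:R <= n%:R ^+ d :> R by rewrite -natrX ler_nat ffact_le_exp.
have eNd : n%:R ^+ d = n%:R ^+ k.+1 * n%:R :> R by rewrite /d exprSr.
set Nk := n%:R ^+ k.+1 in h3 h3' nk0 eNd.
set Nd := n%:R ^+ d in h3 h4 eNd *.
have h5 : d%:R ^+ 2 * Nk <= ga / 2 * Nd.
  rewrite eNd; have := ler_wpM2l nk0 n2ge'.
  have -> : ga / 2 * (Nk * n%:R) = (Nk * (ga * n%:R)) / 2 by rewrite mulrC mulrA (mulrC Nk) -mulrA; field.
  lra.
have h6 : d%:R * d%:R * (a * n%:R) ^+ k.+1 <= d%:R ^+ 2 * Nk.
  by rewrite expr2; apply: ler_wpM2l => //; apply: mulr_ge0; apply: ltW.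
have h7 : s1%:R * alpha * (n ^_ d)%:R <= alpha * s1%:R * Nd.
  by rewrite (mulrC (s1%:R)); apply: ler_wpM2l.
have h8 : ga / 2 * Nd <= ((n - u) ^_ d)%:R - s1%:R * alpha * (n ^_ d)%:R.
  have e8 : ga / 2 * Nd = (a ^+ d * Nd - alpha * s1%:R * Nd) / 2 by rewrite /ga; field.
  move: h1 h2 h3 h5 h6 h7 e8; lra.
have Nd0 : 0 <= Nd by apply: exprn_ge0; apply: ler0n.
apply: le_trans (ler_wpM2l (ler0n _ _) h8).
have : 1 <= c%:R * (ga / 2).
  by rewrite -ler_pdivrMr ?divr_gt0 // mul1r invf_div; apply: ltW.
move=> hc1; rewrite mulrA.
by have := ler_wpM2r Nd0 hc1; rewrite mul1r.
Qed.

Lemma card_bigcup_le (I T : finType) (P : pred I) (F : I -> {set T}) :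
  (#|\bigcup_(i | P i) F i| <= \sum_(i | P i) #|F i|)%N.
Proof.
elim/big_rec2: _ => [|i B k _ IH]; first by rewrite cards0.
by apply: leq_trans (leq_card_setU _ _) _; rewrite leq_add2l.
Qed.

Lemma card_uniq_all (T : finType) d : #|[set w : d.-tuple T | uniq w]| = #|T| ^_ d.
Proof.
have -> : #|T| = #|predT : pred T| by apply: eq_card.
rewrite -(@card_uniq_tuples _ _ predT); apply: eq_card => w.
by rewrite !inE all_predT.
Qed.


Lemma countP (R : realType) d m n (H : {set {set 'I_m + 'I_n}}) (alpha : R)
    (V : {set 'I_m}) (U2 : {set 'I_n}) :
  semibipartite d.+1 H ->
  (forall v : 'I_m, (1 - alpha) * ('C(n, d))%:R <= (deg H (inl v))%:R) ->
  ((n - #|U2|) ^_ d)%:R - #|V|%:R * alpha * (n ^_ d)%:R <=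
  #|[set w : d.-tuple 'I_n | (all (fun x => x \notin U2) w && uniq w)
        && [forall v in V, Ed v w \in H]]|%:R.
Proof.
move=> sb hdeg.
pose NE v := [set w : d.-tuple 'I_n | uniq w && (Ed v w \notin H)].
have hNE v : (#|NE v|%:R <= alpha * (n ^_ d)%:R :> R).
  have e1 : #|[set w : d.-tuple 'I_n | uniq w]| =
      (#|[set w : d.-tuple 'I_n | uniq w && (Ed v w \in H)]| + #|NE v|)%N.
    rewrite -!sum1dep_card (bigID (fun w : d.-tuple 'I_n => Ed v w \in H)) /=.
    by congr (_ + _)%N; apply: eq_bigl => w; rewrite andbC.
  rewrite card_uniq_all card_ord lk_count // in e1.
  have e2 : (#|NE v| = n ^_ d - d`! * deg H (inl v))%N by lia.
  have hd := hdeg v.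
  have le1 : (d`! * deg H (inl v) <= n ^_ d)%N by lia.
  rewrite e2 natrB // natrM -bin_ffact natrM.
  have f0 : (0:R) <= (d`!)%:R by apply: ler0n.
  have := ler_wpM2l f0 hd.
  set C := ('C(n, d))%:R; set F := (d`!)%:R; set D := (deg H (inl v))%:R.
  move=> h; have : F * ((1 - alpha) * C) = C * F - alpha * (C * F) by ring.
  lra.
set Ps := [set w : d.-tuple 'I_n | _].
pose Av := [set w : d.-tuple 'I_n | all (fun x => x \notin U2) w && uniq w].
have cAv : #|Av| = (n - #|U2|) ^_ d.
  rewrite card_uniq_tuples; congr (_ ^_ _).
  have := cardC (mem U2); move/(congr1 (fun z => z - #|U2|)%N).
  rewrite addKn card_ord => <-.
  by apply: eq_card => x.
have sub : Av \subset Ps :|: \bigcup_(v in V) NE v.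
  apply/subsetP => w; rewrite !inE => hw.
  rewrite hw /=; apply/orP.
  case: (pickP (fun v => (v \in V) && (Ed v w \notin H))) => [v /andP[vV nE]|none].
    right; apply/bigcupP; exists v => //; rewrite inE nE andbT.
    by case/andP: hw.
  left; apply/forallP => v; apply/implyP => vV; have := none v.
  by rewrite vV /= => /negbFE.
have c1 := subset_leq_card sub.
have c2 : (#|Ps :|: \bigcup_(v in V) NE v| <= #|Ps| + #|\bigcup_(v in V) NE v|)%N := leq_card_setU _ _.
have c3 := card_bigcup_le (fun v => v \in V) NE.
have : (#|Av| <= #|Ps| + \sum_(v in V) #|NE v|)%N.
  by apply: leq_trans c1 (leq_trans c2 _); rewrite leq_add2l.
rewrite cAv -(ler_nat R) natrD natr_sum => h.

have h2 : \sum_(v in V) (#|NE v|%:R : R) <= #|V|%:R * alpha * (n ^_ d)%:R.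
  apply: le_trans (ler_sum _ (fun v _ => hNE v)) _.
  rewrite sumr_const; have -> : #|V|%:R * alpha * (n ^_ d)%:R = alpha * (n ^_ d)%:R *+ #|V| :> R by rewrite -mulrA mulr_natl. done.
lra.
Qed.

Lemma shrink_card (T : finType) (A : {set T}) k : (k <= #|A|)%N ->
  [set x in take k (enum A)] \subset A /\ #|[set x in take k (enum A)]| = k.
Proof.
move=> kA; split.
  by apply/subsetP => x; rewrite inE => /mem_take; rewrite mem_enum.
by rewrite cardsE (card_uniqP (take_uniq _ (enum_uniq _))) size_takel // -cardE.
Qed.

Lemma card_tuple1 (T : finType) (P : pred (1.-tuple T)) :
  #|[set w | P w]| = #|[set x | P [tuple x]]|.
Proof.
have inj : injective (fun x : T => [tuple x]) by move=> x y [].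
rewrite -(card_imset _ inj); apply: eq_card => w.
case/tupleP: w => x g; rewrite [g]tuple0.
have -> : [tuple of x :: [tuple]] = [tuple x] by apply: val_inj.
by rewrite (mem_imset _ _ inj) !inE.
Qed.


Definition Pset d m n (H : {set {set 'I_m + 'I_n}}) (V : {set 'I_m}) (U2 : {set 'I_n})
  (w : d.-tuple 'I_n) : bool :=
  (all (fun x => x \notin U2) w && uniq w) && [forall v in V, Ed v w \in H].

Lemma findA (R : realType) (d : nat) (s : nat -> nat) (alpha : R) :
  (1 <= d)%N -> 0 <= alpha -> alpha * (s 1%N)%:R < 1 ->
  (forall i, (i < d)%N -> (0 < s i.+2)%N) ->
  exists n0, forall n, (n0 <= n)%N -> forall m (H : {set {set 'I_m + 'I_n}})
    (V : {set 'I_m}) (U2 : {set 'I_n}),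
  semibipartite d.+1 H -> (forall v : 'I_m, (1 - alpha) * ('C(n, d))%:R <= (deg H (inl v))%:R) ->
  #|V| = s 1%N ->
  (#|U2| + \sum_(i < d) s i.+2)%:R * d%:R <= (1 - alpha * (s 1%N)%:R) * n%:R ->
  exists A : nat -> {set 'I_n},
   [/\ forall i, (i < d)%N -> (s i.+2 <= #|A i|)%N,
       forall i j, (i < d)%N -> (j < d)%N -> i != j -> [disjoint A i & A j]
     & forall w : d.-tuple 'I_n, (forall i : 'I_d, tnth w i \in A i) -> Pset H V U2 w].
Proof.
move=> d1 a0 as1 spos.
set S' := (\sum_(i < d) s i.+2)%N.
have S'ge : forall i, (i < d)%N -> (s i.+2 <= S')%N.
  move=> i hi; rewrite /S' (bigD1 (Ordinal hi)) //=; exact: leq_addr.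
have S'0 : (0 < S')%N by apply: leq_trans (spos 0%N d1) (S'ge 0%N d1).
have [d2|d1'] := leqP 2 d.
  have [c [n1 hcn]] := @dens R d (s 1%N) alpha d2 a0 as1.
  have [N0 hN0] := @erdos d S' S'0 c.
  exists (n1 + N0)%N => n hn m H V U2 sb hdeg hV hU.
  have hc := countP V U2 sb hdeg.
  rewrite hV in hc.
  have hu : (#|U2|)%:R * d%:R <= (1 - alpha * (s 1%N)%:R) * n%:R.
    apply: le_trans hU; rewrite natrD mulrDl lerDl; apply: mulr_ge0; apply: ler0n.
  have := hcn n #|U2| ltac:(lia) hu.
  move=> h; have h2 : (n%:R ^+ d : R) <= c%:R * #|[set w : d.-tuple 'I_n | Pset H V U2 w]|%:R.
    apply: le_trans h _; apply: ler_wpM2l; [exact: ler0n| exact: hc].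
  have h3 : (#|'I_n| ^ d <= c * #|[set w : d.-tuple 'I_n | Pset H V U2 w]|)%N.
    by rewrite card_ord -(ler_nat R) natrM natrX.
  have [A [HA1 HA2 HA3]] := hN0 _ (Pset H V U2) ltac:(rewrite card_ord; lia) h3.
  exists A; split => //.
  by move=> i hi; rewrite HA1 // S'ge.
have d1e : d = 1%N by lia.
subst d.
exists 0%N => n _ m H V U2 sb hdeg hV hU.
have hc := countP V U2 sb hdeg.
rewrite hV !ffactn1 in hc.
have hS : S' = s 2%N by rewrite /S' big_ord1.
have hnu := natrB_ge R n #|U2|.
have h : (S'%:R : R) <= #|[set w : 1.-tuple 'I_n | Pset H V U2 w]|%:R.
  apply: le_trans hc; rewrite natrD mulr1 in hU.
  have : (s 1%N)%:R * alpha * n%:R = alpha * (s 1%N)%:R * n%:R :> R by ring.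
  lra.
rewrite ler_nat card_tuple1 in h.
exists (fun _ => [set x | Pset H V U2 [tuple x]]); split.
- by move=> i; rewrite ltnS leqn0 => /eqP ->; rewrite -hS.
- by move=> i j; rewrite !ltnS !leqn0 => /eqP -> /eqP ->; rewrite eqxx.
- move=> w hw; have := hw ord0; rewrite inE.
  case/tupleP: w hw => x g _; rewrite [g]tuple0 tnth0.
  by have -> : [tuple of x :: [tuple]] = [tuple x] by apply: val_inj.
Qed.


Lemma ltS_ne {i j} : (i < j.+1)%N -> i <> j -> (i < j)%N.
Proof. lia. Qed.
Lemma ltS_neb {i j} : (i < j.+1)%N -> i != j -> (i < j)%N.
Proof. move=> h /eqP; lia. Qed.

Unset Implicit Arguments.

Theorem lemma5p3 (R : realType) (r : nat) (s : nat -> nat) (alpha : R) :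
  (2 <= r)%N ->
  (2 <= s 1%N)%N ->
  (forall i, (1 <= i < r)%N -> (s i <= s i.+1)%N) ->
  0 <= alpha -> alpha < 1 / (s 1%N)%:R ->
  let ssum := (\sum_(1 <= i < r.+1) s i)%N in
  exists n0 : nat, forall n : nat, (n0 <= n)%N ->
  forall (m : nat) (H : {set {set 'I_m + 'I_n}}),
    semibipartite r H ->
    m%:R <= (1 - alpha * (s 1%N)%:R) * (s 1%N)%:R
              / ((r - 1)%:R * (ssum - s 1%N)%:R) * n%:R ->
    (forall v : 'I_m, (1 - alpha) * ('C(n, r - 1))%:R <= (deg H (inl v))%:R) ->
    exists W : 'I_(m %/ s 1%N) -> nat -> {set 'I_m + 'I_n},
      (forall j, ordered_copy r s H (W j)) /\
      (forall j k, j != k -> [disjoint copy_vertices r (W j) & copy_vertices r (W k)]).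
Proof.
move=> hr hs1 hmono a0 ha; case: r hr hmono => [//|d] hr hmono ssum.
rewrite subn1 /=.
set s1 := s 1%N.
have d1 : (1 <= d)%N by lia.
have s10 : (0 < s1)%N by rewrite /s1; lia.
have s1R : (0:R) < s1%:R by rewrite ltr0n.
have as1 : alpha * s1%:R < 1 by rewrite -ltr_pdivlMr.
have smon : forall i, (1 <= i <= d.+1)%N -> (s1 <= s i)%N.
  elim=> [//|i IH] /andP[hi1 hi2]; case: (eqVneq i 0%N) => [->//|ni].
  apply: leq_trans (IH _) (hmono i _); apply/andP; split; lia.
have spos : forall i, (i < d)%N -> (0 < s i.+2)%N.
  by move=> i hi; have := smon i.+2 ltac:(lia); lia.
set S' := (\sum_(i < d) s i.+2)%N.
have hS : (ssum - s1)%N = S'.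
  rewrite /ssum big_nat_recl // big_add1 /= big_mkord addKn //.
have [n0 hn0] := @findA R d s alpha d1 a0 as1 spos.
exists (n0 + 1)%N => n hn m H sb hm hdeg.
rewrite hS in hm.
have n0n : (0 < n)%N by lia.
pose x0 : 'I_n := Ordinal n0n.
set k := (m %/ s1)%N.
have kS : (k * s1 <= m)%N by rewrite /k; apply: leq_trunc_div.
have dS0 : (0:R) < d%:R * S'%:R.
  apply: mulr_gt0; rewrite ltr0n //; have := spos 0%N d1.
  have : (s 2 <= S')%N by rewrite /S' (bigD1 (Ordinal d1)) //=; exact: leq_addr.
  lia.
have hm' : m%:R * (d%:R * S'%:R) <= (1 - alpha * s1%:R) * s1%:R * n%:R.
  by rewrite mulrAC ler_pdivlMr // in hm.
pose Inv (j : nat) := exists (Wf : nat -> nat -> {set 'I_m + 'I_n}) (U1 : {set 'I_m})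
   (U2 : {set 'I_n}),
   [/\ (#|U1| <= j * s1)%N, (#|U2| <= j * S')%N,
       forall i, (i < j)%N -> ordered_copy d.+1 s H (Wf i),
       forall i, (i < j)%N -> copy_vertices d.+1 (Wf i) \subset inl @: U1 :|: inr @: U2
     & forall i i', (i < j)%N -> (i' < j)%N -> i != i' ->
         [disjoint copy_vertices d.+1 (Wf i) & copy_vertices d.+1 (Wf i')]].
have inv : forall j, (j <= k)%N -> Inv j.
  elim=> [_|j IH hj].
    by exists (fun _ _ => set0), set0, set0; split; rewrite ?cards0.
  have [Wf [U1 [U2 [hU1 hU2 hc hv hd]]]] := IH (ltnW hj).
  have cU1 : (s1 <= #|~: U1|)%N.
    have := cardsC U1; rewrite card_ord => e.
    have : (j.+1 * s1 <= k * s1)%N by rewrite leq_mul2r hj orbT.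
    lia.
  have [VU1 cV] := shrink_card cU1.
  set V := [set x in take s1 (enum (~: U1))] in VU1 cV.
  have hU : (#|U2| + S')%:R * d%:R <= (1 - alpha * s1%:R) * n%:R.
    have hn1 : ((#|U2| + S') * d * s1 <= m * (d * S'))%N.
      have h1 : (#|U2| + S' <= j.+1 * S')%N by rewrite mulSn; lia.
      have h2 : (j.+1 * s1 <= m)%N.
        by apply: leq_trans kS; rewrite leq_mul2r hj orbT.
      have h3 : ((#|U2| + S') * s1 <= j.+1 * S' * s1)%N by rewrite leq_mul2r h1 orbT.
      have h4 : (j.+1 * S' * s1 <= m * S')%N by rewrite mulnAC leq_mul2r h2 orbT.
      have h5 := leq_trans h3 h4.
      have e1 : ((#|U2| + S') * d * s1 = d * ((#|U2| + S') * s1))%N by rewrite mulnAC mulnC.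
      have e2 : (m * (d * S') = d * (m * S'))%N by rewrite mulnCA.
      by rewrite e1 e2 leq_mul2l h5 orbT.
    rewrite -(ler_pM2r s1R).
    have -> : (1 - alpha * s1%:R) * n%:R * s1%:R = (1 - alpha * s1%:R) * s1%:R * n%:R by rewrite mulrAC.
    apply: le_trans _ hm'.
    by have := hn1; rewrite -(ler_nat R) !natrM.
  have hdeg' : forall v : 'I_m, (1 - alpha) * ('C(n, d))%:R <= (deg H (inl v))%:R := hdeg.
  have [A [hA1 hA2 hA3]] := hn0 n (leq_trans (leq_addr 1 n0) hn) m H V U2 sb hdeg' cV hU.
  pose B (i : nat) := [set x in take (s i.+2) (enum (A i))].
  have hB : forall i, (i < d)%N -> B i \subset A i /\ #|B i| = s i.+2.
    by move=> i hi; apply: shrink_card; apply: hA1.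
  have hBdis : forall i i', (i < d)%N -> (i' < d)%N -> i != i' -> [disjoint B i & B i'].
    move=> i i' hi hi' ne; apply: (disjointW (hB i hi).1 (hB i' hi').1).
    exact: hA2.
  have Apos : forall i, (i < d)%N -> (0 < #|A i|)%N.
    by move=> i hi; apply: leq_trans (spos i hi) (hA1 i hi).
  have hBU2 : forall i, (i < d)%N -> [disjoint B i & U2].
    move=> i hi; apply: disjP => a aB aU.
    have aA : a \in A i := subsetP (hB i hi).1 a aB.
    have [g [hg ga]] := box_witness Apos hi aA.
    have /andP[/andP[/allP hall _] _] := hA3 g hg.
    by have := hall _ (mem_tnth (Ordinal hi) g); rewrite ga aU.
  have hbox : forall w : d.-tuple 'I_n, (forall i : 'I_d, tnth w i \in B i) ->
      forall v, v \in V -> Ed v w \in H.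
    move=> w hw v vV.
    have hwA : forall i : 'I_d, tnth w i \in A i.
      by move=> i; apply: (subsetP (hB i (ltn_ord i)).1); apply: hw.
    have /andP[_ /forallP hf] := hA3 w hwA.
    by have := hf v; rewrite vV.
  have hW := @copy_ok d m n H s V B x0 cV (fun i hi => (hB i hi).2) hBdis hbox.
  set W := mkW d V B in hW.
  have hVU1 : [disjoint V & U1].
    by apply: disjP => x xV xU; have := subsetP VU1 x xV; rewrite inE xU.
  have hBun : [disjoint \bigcup_(i < d) B i & U2].
    apply: disjP => x /bigcupP [i _ xB] xU.
    by have := disjointFr (hBU2 i (ltn_ord i)) xB; rewrite xU.
  exists (fun i => if i == j then W else Wf i), (U1 :|: V), (U2 :|: \bigcup_(i < d) B i).
  split.
  - apply: leq_trans (leq_card_setU _ _) _.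
    by rewrite cV mulSn addnC leq_add2l.
  - apply: leq_trans (leq_card_setU _ _) _.
    apply: leq_trans (leq_add (leqnn _) (card_bigcup_le _ _)) _.
    have -> : (\sum_(i < d) #|B i| = S')%N.
      by apply: eq_bigr => i _; exact: (hB i (ltn_ord i)).2.
    by rewrite mulSn addnC leq_add2l.
  - move=> i hi; case: eqP => [_|ne]; first exact: hW.
    by apply: hc; apply: ltS_ne.
  - move=> i hi; case: eqP => [_|ne].
      apply: subset_trans (mkW_sub d V B) _.
      by apply: setUSS; apply: imsetS; apply: subsetUr.
    apply: subset_trans (hv i (ltS_ne hi ne)) _.
    by apply: setUSS; apply: imsetS; apply: subsetUl.
  - move=> i i' hi hi' ne.
    case: (eqVneq i j) => [ei|nei]; case: (eqVneq i' j) => [ei'|nei'].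
    + by rewrite ei ei' eqxx in ne.
    + apply: (disj_sum (mkW_sub d V B) (hv i' (ltS_neb hi' nei')) hVU1 hBun).
    + rewrite disjoint_sym.
      apply: (disj_sum (mkW_sub d V B) (hv i (ltS_neb hi nei)) hVU1 hBun).
    + by apply: hd => //; apply: ltS_neb.
have [Wf [U1 [U2 [_ _ hc _ hd]]]] := inv k (leqnn k).
exists (fun j : 'I_k => Wf (val j)); split.
  by move=> j; apply: hc; exact: ltn_ord.
by move=> j j' jj'; apply: hd => //; exact: ltn_ord.
Qed.
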